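(* Let $\mathcal{M}$ (mobile devices) and $\mathcal{E}$ (edge servers) be finite nonempty index sets, and let $\hat{D}_{\text{cm},ij}\ge 0$, $\hat{D}_{\text{ES}(s),ij}\ge 0$ and $c_{ij}\in\mathbb{R}$ be given constants for $(i,j)\in\mathcal{M}\times\mathcal{E}$. Let $\mathcal{X}$ be the set of matrices $\mathbf{X}=(x_{ij})\in\{0,1\}^{\mathcal{M}\times\mathcal{E}}$ with $\sum_{j\in\mathcal{E}}x_{ij}\le 1$ for all $i\in\mathcal{M}$, and consider the primal user-association problem $$\min_{\mathbf{X}\in\mathcal{X}} F(\mathbf{X}),\qquad F(\mathbf{X})=\sum_{j\in\mathcal{E}}\Big(\sum_{i\in\mathcal{M}}\sqrt{\hat{D}_{\text{ES}(s),ij}}\,x_{ij}\Big)^2+\sum_{j\in\mathcal{E}}\Big(\sum_{i\in\mathcal{M}}\sqrt{\hat{D}_{\text{cm},ij}}\,x_{ij}\Big)^2+\sum_{i\in\mathcal{M}}\sum_{j\in\mathcal{E}}c_{ij}x_{ij},$$ with optimal value $\hat f^*=\min_{\mathbf{X}\in\mathcal{X}}F(\mathbf{X})$. This is reformulated with slack variables $a_j,b_j\ge 0$ and constraints $\sqrt{a_j}=\sum_{i}\sqrt{\hat{D}_{\text{cm},ij}}x_{ij}$, $\sqrt{b_j}=\sum_i\sqrt{\hat{D}_{\text{ES}(s),ij}}x_{ij}$ ($j\in\mathcal{E}$) and objective $\sum_j(a_j+b_j)+\sum_{i,j}c_{ij}x_{ij}$, whose Lagrangian with multipliers $\boldsymbol{\mu}=(\mu_j)_{j\in\mathcal{E}}$,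 $\boldsymbol{\nu}=(\nu_j)_{j\in\mathcal{E}}$ is $$\mathcal{L}(\mathbf{X},\mathbf{a},\mathbf{b};\boldsymbol{\mu},\boldsymbol{\nu})=\sum_{j}(a_j+b_j)+\sum_{i,j}c_{ij}x_{ij}+\sum_j\mu_j\Big(-\sqrt{a_j}+\sum_i\sqrt{\hat{D}_{\text{cm},ij}}x_{ij}\Big)+\sum_j\nu_j\Big(-\sqrt{b_j}+\sum_i\sqrt{\hat{D}_{\text{ES}(s),ij}}x_{ij}\Big).$$ Define the dual function $$g(\boldsymbol{\mu},\boldsymbol{\nu})=-\sum_{j\in\mathcal{E}}\Big(\frac{\mu_j^2}{4}+\frac{\nu_j^2}{4}\Big)+\sum_{i\in\mathcal{M}}\min\Big\{0,\ \min_{j\in\mathcal{E}}\big(\mu_j\sqrt{\hat{D}_{\text{cm},ij}}+\nu_j\sqrt{\hat{D}_{\text{ES}(s),ij}}+c_{ij}\big)\Big\},$$ let $(\boldsymbol{\mu}^*,\boldsymbol{\nu}^* )$ be a maximizer of $g$, and define the recovered solution $\hat a_j=(\mu_j^* )^2/4$, $\hat b_j=(\nu_j^* )^2/4$, and $\hat{\mathbf{X}}\in\mathcal{X}$ by: for each $i$, $\hat x_{ij}=1$ for $j=\arg\min_{j\in\mathcal{E}}(\mu^*_j\sqrt{\hat{D}_{\text{cm},ij}}+\nu^*_j\sqrt{\hat{D}_{\text{ES}(s),ij}}+c_{ij})$ if this minimum is not larger than $0$, and $\hat x_{ij}=0$ for all other $j$ (all $\hat x_{ij}=0$ if the minimum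 is larger than $0$). Let $$\Delta_j^{(1)}=\sqrt{\hat a_j}-\sum_{i\in\mathcal{M}}\sqrt{\hat{D}_{\text{cm},ij}}\,\hat x_{ij},\qquad \Delta_j^{(2)}=\sqrt{\hat b_j}-\sum_{i\in\mathcal{M}}\sqrt{\hat{D}_{\text{ES}(s),ij}}\,\hat x_{ij}.$$ Then the performance gap between $\hat{\mathbf{X}}$ and the globally optimal solution, $F(\hat{\mathbf{X}})-\hat f^*$, is bounded by $\mathcal{O}\big(\sum_{j\in\mathcal{E}}((\Delta_j^{(1)})^2+(\Delta_j^{(2)})^2)\big)$.
   Context: This arises from a mobile edge computing model: $x_{ij}=1$ means mobile device $i$ offloads its task to edge server $j$, and $x_{ij}=0$ for all $j$ means local computation. The constants are $\hat{D}_{\text{cm},ij}=d_i/R_{ij}$ (task bits over rate), $\hat{D}_{\text{ES}(s),ij}=f_i\rho_i/(F_{\text{ES},j}Z_{\text{ES},j})$, and $c_{ij}$ collects the remaining delay/energy-penalty terms; only the abstract optimization problem above matters for the claim. *)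

(* Defs.v *)
From HB Require Import structures.
From mathcomp Require Import all_boot all_order all_algebra.
From mathcomp Require Import reals.
Set Implicit Arguments. Unset Strict Implicit. Unset Printing Implicit Defensive.
Import Order.TTheory GRing.Theory Num.Theory.
Local Open Scope ring_scope.

Section MEC.
Variables (R : realType) (M E : finType).
Implicit Types (X : M -> E -> R) (Dcm Des c : M -> E -> R) (mu nu : E -> R).

Definition feasible X : Prop :=
  (forall i j, X i j = 0 \/ X i j = 1) /\ (forall i, \sum_(j : E) X i j <= 1).

Definition Fobj Dcm Des c X : R :=
  \sum_(j : E) (\sum_(i : M) Num.sqrt (Des i j) * X i j) ^+ 2
  + \sum_(j : E) (\sum_(i : M) Num.sqrt (Dcm i j) * X i j) ^+ 2
  + \sum_(i : M) \sum_(j : E) c i j * X i j.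

Definition is_opt_value Dcm Des c (fstar : R) : Prop :=
  (exists X, feasible X /\ Fobj Dcm Des c X = fstar) /\
  (forall X, feasible X -> fstar <= Fobj Dcm Des c X).

Definition hval Dcm Des c mu nu (i : M) (j : E) : R :=
  mu j * Num.sqrt (Dcm i j) + nu j * Num.sqrt (Des i j) + c i j.

(* dual function g; min{0, min_j h_ij} is the min over {0} U {h_ij}_j *)
Definition dualg Dcm Des c mu nu : R :=
  - \sum_(j : E) (mu j ^+ 2 / 4 + nu j ^+ 2 / 4)
  + \sum_(i : M) \big[Num.min/0]_(j : E) hval Dcm Des c mu nu i j.

Definition recovered Dcm Des c mu nu (Xh : M -> E -> R) : Prop :=
  forall i,
    (exists j0, (forall j, hval Dcm Des c mu nu i j0 <= hval Dcm Des c mu nu i j)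
       /\ hval Dcm Des c mu nu i j0 <= 0
       /\ forall j, Xh i j = (j == j0)%:R)
    \/ ((forall j, 0 < hval Dcm Des c mu nu i j) /\ forall j, Xh i j = 0).

(* Delta^(1)_j with \hat a_j = mu_j^2/4, Delta^(2)_j with \hat b_j = nu_j^2/4 *)
Definition Delta1 Dcm mu (Xh : M -> E -> R) (j : E) : R :=
  Num.sqrt (mu j ^+ 2 / 4) - \sum_(i : M) Num.sqrt (Dcm i j) * Xh i j.
Definition Delta2 Des nu (Xh : M -> E -> R) (j : E) : R :=
  Num.sqrt (nu j ^+ 2 / 4) - \sum_(i : M) Num.sqrt (Des i j) * Xh i j.

End MEC.

(* Main.v *)
Require Import Defs.
From HB Require Import structures.
From mathcomp Require Import all_boot all_order all_algebra.
From mathcomp Require Import reals.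
From mathcomp Require Import ring lra.
Import Order.TTheory GRing.Theory Num.Theory.
Local Open Scope ring_scope.

Section Aux.
Variable R : realType.

Lemma bigmin_ub (I : finType) (F : I -> R) :
  \big[Num.min/0]_i F i <= 0 /\ forall j, \big[Num.min/0]_i F i <= F j.
Proof.
suff H : forall s, (\big[Num.min/0]_(i <- s) F i <= 0) /\
    forall j, j \in s -> \big[Num.min/0]_(i <- s) F i <= F j.
  have [H1 H2] := H (index_enum I); split; first exact H1.
  by move=> j; apply: H2; rewrite mem_index_enum.
elim=> [|a s [IH1 IH2]]; first by rewrite big_nil; split.
rewrite big_cons; split; first by rewrite ge_min IH1 orbT.
move=> j; rewrite inE => /orP[/eqP->|js]; first by rewrite ge_min lexx.
by rewrite ge_min IH2 ?orbT.
Qed.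

Lemma bigmin_lb (I : finType) (F : I -> R) (x : R) :
  x <= 0 -> (forall j, x <= F j) -> x <= \big[Num.min/0]_i F i.
Proof.
move=> h0 h; apply: (big_ind (fun y => x <= y)) => //.
by move=> a b ha hb; rewrite le_min ha hb.
Qed.

Lemma key (M E : finType) (Dcm Des c : M -> E -> R) (mu nu : E -> R)
  (X : M -> E -> R) :
  Fobj Dcm Des c X =
  - \sum_(j : E) (mu j ^+ 2 / 4 + nu j ^+ 2 / 4)
  + \sum_(i : M) \sum_(j : E) X i j * hval Dcm Des c mu nu i j
  + \sum_(j : E) ((\sum_(i : M) Num.sqrt (Dcm i j) * X i j - mu j / 2) ^+ 2
               + (\sum_(i : M) Num.sqrt (Des i j) * X i j - nu j / 2) ^+ 2).
Proof.
have E1 : \sum_(i : M) \sum_(j : E) X i j * hval Dcm Des c mu nu i j =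
   \sum_(j : E) (mu j * (\sum_(i : M) Num.sqrt (Dcm i j) * X i j)
                + nu j * (\sum_(i : M) Num.sqrt (Des i j) * X i j))
   + \sum_(i : M) \sum_(j : E) c i j * X i j.
  transitivity (\sum_(i : M) \sum_(j : E)
     ((mu j * (Num.sqrt (Dcm i j) * X i j) + nu j * (Num.sqrt (Des i j) * X i j))
       + c i j * X i j)).
    by apply: eq_bigr => i _; apply: eq_bigr => j _; rewrite /hval; ring.
  under eq_bigr => i _ do rewrite big_split /=.
  rewrite big_split /=; congr (_ + _).
  rewrite exchange_big /=; apply: eq_bigr => j _.
  by rewrite big_split /= !mulr_sumr.
rewrite /Fobj E1.
set A := fun j => \sum_(i : M) Num.sqrt (Dcm i j) * X i j.
set B := fun j => \sum_(i : M) Num.sqrt (Des i j) * X i j.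
have E2 : \sum_(j : E) (\sum_(i : M) Num.sqrt (Des i j) * X i j) ^+ 2
        + \sum_(j : E) (\sum_(i : M) Num.sqrt (Dcm i j) * X i j) ^+ 2
  = \sum_(j : E) (- (mu j ^+ 2 / 4 + nu j ^+ 2 / 4) + (mu j * A j + nu j * B j)
       + ((A j - mu j / 2) ^+ 2 + (B j - nu j / 2) ^+ 2)).
  rewrite -big_split; apply: eq_bigr => j _ /=; rewrite /A /B /=; by field.
rewrite E2 !big_split /= sumrN !big_split /=.
rewrite /A /B /=; by field.
Qed.

Lemma dual_mono (M E : finType) (Dcm Des c : M -> E -> R) (mu nu mu' nu' : E -> R) :
  (forall i j, 0 <= Dcm i j) -> (forall i j, 0 <= Des i j) ->
  (forall j, mu j <= mu' j) -> (forall j, nu j <= nu' j) ->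
  \sum_(i : M) \big[Num.min/0]_(j : E) hval Dcm Des c mu nu i j <=
  \sum_(i : M) \big[Num.min/0]_(j : E) hval Dcm Des c mu' nu' i j.
Proof.
move=> hD1 hD2 hm hn; apply: ler_sum => i _.
have [u1 u2] := @bigmin_ub _ (fun j => hval Dcm Des c mu nu i j).
apply: bigmin_lb => // j; apply: le_trans (u2 j) _.
rewrite /hval.
have s1 := sqrtr_ge0 (Dcm i j); have s2 := sqrtr_ge0 (Des i j).
have := hm j; have := hn j; nra.
Qed.

End Aux.

Theorem theorem1 (R : realType) :
  exists C : R, 0 < C /\
  forall (M E : finType) (Dcm Des c : M -> E -> R) (fstar : R)
         (mus nus : E -> R) (Xh : M -> E -> R),
    (0 < #|M|)%N -> (0 < #|E|)%N ->
    (forall i j, 0 <= Dcm i j) -> (forall i j, 0 <= Des i j) ->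
    is_opt_value Dcm Des c fstar ->
    (forall mu nu : E -> R, dualg Dcm Des c mu nu <= dualg Dcm Des c mus nus) ->
    recovered Dcm Des c mus nus Xh ->
    Fobj Dcm Des c Xh - fstar
      <= C * \sum_(j : E) (Delta1 Dcm mus Xh j ^+ 2 + Delta2 Des nus Xh j ^+ 2).
Proof.
exists 1; split => //.
move=> M E Dcm Des c fstar mus nus Xh _ _ hD1 hD2 [[Xo [[Xo01 Xo1] hXo]] _] hopt hrec.
have mus_ge0 : forall j, 0 <= mus j.
  move=> j0; rewrite leNgt; apply/negP => hneg.
  pose mu' := fun j => if j == j0 then 0 else mus j.
  have := hopt mu' nus; rewrite /dualg.
  have hm := @dual_mono R M E Dcm Des c mus nus mu' nus hD1 hD2.
  have : \sum_(i : M) \big[Num.min/0]_(j : E) hval Dcm Des c mus nus i j <=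
         \sum_(i : M) \big[Num.min/0]_(j : E) hval Dcm Des c mu' nus i j.
    apply: hm => // j; rewrite /mu'; case: eqP => [->|//]; exact: ltW.
  have -> : \sum_(j : E) (mu' j ^+ 2 / 4 + nus j ^+ 2 / 4) = \sum_(j : E) (mus j ^+ 2 / 4 + nus j ^+ 2 / 4) - mus j0 ^+ 2 / 4.
    rewrite (bigD1 j0) //= [in RHS](bigD1 j0) //= /mu' eqxx.
    have -> : \sum_(i : E | i != j0) ((if i == j0 then 0 else mus i) ^+ 2 / 4 + nus i ^+ 2 / 4) =
      \sum_(i : E | i != j0) (mus i ^+ 2 / 4 + nus i ^+ 2 / 4).
      by apply: eq_bigr => i /negbTE ->.
    by field.
  have : 0 < mus j0 ^+ 2 by rewrite exprn_even_gt0 //= ltr0_neq0.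
  lra.
have nus_ge0 : forall j, 0 <= nus j.
  move=> j0; rewrite leNgt; apply/negP => hneg.
  pose nu' := fun j => if j == j0 then 0 else nus j.
  have := hopt mus nu'; rewrite /dualg.
  have hm := @dual_mono R M E Dcm Des c mus nus mus nu' hD1 hD2.
  have : \sum_(i : M) \big[Num.min/0]_(j : E) hval Dcm Des c mus nus i j <=
         \sum_(i : M) \big[Num.min/0]_(j : E) hval Dcm Des c mus nu' i j.
    apply: hm => // j; rewrite /nu'; case: eqP => [->|//]; exact: ltW.
  have -> : \sum_(j : E) (mus j ^+ 2 / 4 + nu' j ^+ 2 / 4) = \sum_(j : E) (mus j ^+ 2 / 4 + nus j ^+ 2 / 4) - nus j0 ^+ 2 / 4.
    rewrite (bigD1 j0) //= [in RHS](bigD1 j0) //= /nu' eqxx.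
    have -> : \sum_(i : E | i != j0) (mus i ^+ 2 / 4 + (if i == j0 then 0 else nus i) ^+ 2 / 4) =
      \sum_(i : E | i != j0) (mus i ^+ 2 / 4 + nus i ^+ 2 / 4).
      by apply: eq_bigr => i /negbTE ->.
    by field.
  have : 0 < nus j0 ^+ 2 by rewrite exprn_even_gt0 //= ltr0_neq0.
  lra.
have hw : dualg Dcm Des c mus nus <= fstar.
  rewrite -hXo (@key R M E Dcm Des c mus nus Xo) /dualg.
  have : \sum_(i : M) \big[Num.min/0]_(j : E) hval Dcm Des c mus nus i j <=
         \sum_(i : M) \sum_(j : E) Xo i j * hval Dcm Des c mus nus i j.
    apply: ler_sum => i _.
    have [u1 u2] := @bigmin_ub R _ (fun j => hval Dcm Des c mus nus i j).
    set m := \big[Num.min/0]_(j : E) hval Dcm Des c mus nus i j in u1 u2 *.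
    apply: (@le_trans _ _ (\sum_(j : E) Xo i j * m)).
      rewrite -mulr_suml.
      have := Xo1 i; nra.
    apply: ler_sum => j _; apply: ler_wpM2l; last exact: u2.
    by case: (Xo01 i j) => ->.
  have : 0 <= \sum_(j : E) ((\sum_(i : M) Num.sqrt (Dcm i j) * Xo i j - mus j / 2) ^+ 2
               + (\sum_(i : M) Num.sqrt (Des i j) * Xo i j - nus j / 2) ^+ 2).
    by apply: sumr_ge0 => j _; rewrite addr_ge0 ?sqr_ge0.
  lra.
have hr : \sum_(i : M) \sum_(j : E) Xh i j * hval Dcm Des c mus nus i j <=
          \sum_(i : M) \big[Num.min/0]_(j : E) hval Dcm Des c mus nus i j.
  apply: ler_sum => i _.
  case: (hrec i) => [[j0 [hmin [hle hX]]]|[hpos hX]].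
  - have -> : \sum_(j : E) Xh i j * hval Dcm Des c mus nus i j =
              hval Dcm Des c mus nus i j0.
      rewrite (bigD1 j0) //= hX eqxx mul1r big1 ?addr0 // => j /negbTE hj.
      by rewrite hX hj mul0r.
    exact: (@bigmin_lb R).
  - rewrite big1; last by move=> j _; rewrite hX mul0r.
    by apply: (@bigmin_lb R) => // j; exact: ltW.
have hsq : \sum_(j : E) ((\sum_(i : M) Num.sqrt (Dcm i j) * Xh i j - mus j / 2) ^+ 2
               + (\sum_(i : M) Num.sqrt (Des i j) * Xh i j - nus j / 2) ^+ 2)
    = \sum_(j : E) (Delta1 Dcm mus Xh j ^+ 2 + Delta2 Des nus Xh j ^+ 2).
  apply: eq_bigr => j _; rewrite /Delta1 /Delta2.
  have e1 : mus j ^+ 2 / 4 = (mus j / 2) ^+ 2 by field.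
  have e2 : nus j ^+ 2 / 4 = (nus j / 2) ^+ 2 by field.
  rewrite e1 e2 !sqrtr_sqr !ger0_norm ?divr_ge0 //; by field.
move: hw; rewrite (@key R M E Dcm Des c mus nus Xh) /dualg hsq mul1r.
lra.
Qed.
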